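(* Let $r\ge1$ and let $D_r$ be the $r\times(2r-1)$ matrix with rows indexed by $1,\dots,r$ and columns indexed by $0,1,\dots,2r-2$, whose $(k,c)$ entry is $1$ if $c=r-k$ or $c=r-2+k$, and $0$ otherwise (so row $1$ has a single $1$ in column $r-1$, and row $k\ge2$ has $1$'s in columns $r-k$ and $r-2+k$). For a partition $\lambda$ with $l(\lambda)\le r$ and $\lambda_1\le r-1$, let $I(\lambda)=\{\lambda_r,\lambda_{r-1}+1,\dots,\lambda_1+r-1\}\subseteq\{0,\dots,2r-2\}$ and let $\Delta_{I(\lambda)}(D_r)$ be the $r\times r$ submatrix of $D_r$ consisting of the columns indexed by $I(\lambda)$ (in increasing order). Then $$\det\Delta_{I(\lambda)}(D_r)=\begin{cases}(-1)^{r(r-1)/2+|\lambda|/2}&\text{if }\lambda\in\mathcal P_r,\\ 0&\text{otherwise.}\end{cases}$$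
   Context: Partitions: a partition $\lambda=(\lambda_1\ge\lambda_2\ge\cdots)$ of nonnegative integers with finitely many nonzero parts; $l(\lambda)$ is the number of nonzero parts, $|\lambda|=\sum_i\lambda_i$. In Frobenius notation $\lambda=(\alpha_1,\dots,\alpha_d\,|\,\beta_1,\dots,\beta_d)$ where $d=\#\{i:\lambda_i\ge i\}$, $\alpha_i=\lambda_i-i$, $\beta_i=\lambda'_i-i$ ($\lambda'$ the conjugate partition). For an integer $m\ge 0$, $\mathcal{P}_m$ is the set of partitions $\lambda$ with $l(\lambda)\le m$ of the form $(\alpha_1,\dots,\alpha_d\,|\,\alpha_1+1,\dots,\alpha_d+1)$ (the empty partition included; $|\lambda|$ is then even). *)

(* Defs.v *)
From HB Require Import structures.
From mathcomp Require Import all_boot all_order all_algebra.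
From mathcomp Require Import zify.
Set Implicit Arguments. Unset Strict Implicit. Unset Printing Implicit Defensive.
Import Order.TTheory GRing.Theory Num.Theory.

(* Partitions are represented as finite nonincreasing sequences of positive
   naturals (the nonzero parts).  lambda_i (1-indexed) is [part lam i];
   parts beyond the length are 0. *)
Definition is_partition (lam : seq nat) : bool :=
  sorted geq lam && all (fun x => 0 < x) lam.

Definition part (lam : seq nat) (i : nat) : nat := nth 0 lam i.-1.

Definition plen (lam : seq nat) : nat := size lam.

Definition psize (lam : seq nat) : nat := sumn lam.

Definition conjpart (lam : seq nat) (i : nat) : nat :=
  count (fun x => i <= x) lam.

Definition frob_rank (lam : seq nat) : nat :=
  count (fun i => i <= part lam i) (iota 1 (size lam)).

Definition frob_alpha (lam : seq nat) (i : nat) : nat := part lam i - i.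
Definition frob_beta (lam : seq nat) (i : nat) : nat := conjpart lam i - i.

Definition inP (m : nat) (lam : seq nat) : bool :=
  [&& is_partition lam, plen lam <= m &
      all (fun i => frob_beta lam i == frob_alpha lam i + 1)
          (iota 1 (frob_rank lam))].

(* Entry of D_r in row k (1-indexed, 1 <= k <= r) and column c (0 <= c <= 2r-2):
   1 iff c = r - k or c = r - 2 + k (written without truncated subtraction). *)
Definition Dentry (r k c : nat) : int :=
  if (c + k == r) || (c + 2 == r + k) then 1 else 0.

(* D_r : rows 'I_r (row i is k = i+1), columns 'I_(2r-1) (column j is c = j) *)
Definition Dmat (r : nat) : 'M[int]_(r, (2 * r).-1) :=
  \matrix_(i < r, j < (2 * r).-1) Dentry r i.+1 j.

Lemma r_le_2r1 (r : nat) : r <= (2 * r).-1.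
Proof. case: r => // r; rewrite mulnS /=; lia. Qed.

(* The i-th (0-based) element, in increasing order, of
   I(lambda) = { lambda_r, lambda_{r-1}+1, ..., lambda_1 + r - 1 },
   namely lambda_{r-i} + i. *)
Definition Ielem (r : nat) (lam : seq nat) (i : nat) : nat := part lam (r - i) + i.

(* column selector; the default value is only used when out of range *)
Definition Icol (r : nat) (lam : seq nat) (i : 'I_r) : 'I_((2 * r).-1) :=
  insubd (widen_ord (r_le_2r1 r) i) (Ielem r lam i).

Definition DeltaI (r : nat) (lam : seq nat) : 'M[int]_r :=
  colsub (Icol lam) (Dmat r).

(* Main.v *)
Require Import Defs.
From HB Require Import structures.
From mathcomp Require Import all_boot all_order all_algebra.
From mathcomp Require Import zify.

Lemma geq_trans' : transitive geq.
Proof. by move=> a b c /= H1 H2; apply: leq_trans H2 H1. Qed.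

Lemma nth_all (P : pred nat) s i : P 0 -> all P s -> P (nth 0 s i).
Proof.
move=> P0; elim: s i => [|x s IH] [|i] //=; first by case/andP.
by case/andP=> _; apply: IH.
Qed.

Lemma part_le0 lam i : is_partition lam -> nth 0 lam i <= nth 0 lam 0.
Proof.
case: lam => [|x t] /andP[Hs _] //=; first by rewrite nth_nil.
have Ht := order_path_min geq_trans' Hs.
case: i => [|i] //=; apply: (@nth_all (fun y => y <= x)) => //.
Qed.

Lemma pos_nth {lam i} : is_partition lam -> i < size lam -> 0 < nth 0 lam i.
Proof. by case/andP=> _ /allP H Hi; apply: H; apply: mem_nth. Qed.

Lemma size_le lam r : is_partition lam -> nth 0 lam r = 0 -> size lam <= r.
Proof.
move=> Hp H; rewrite leqNgt; apply/negP => /(pos_nth Hp); by rewrite H.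
Qed.

Definition hk (t : seq nat) := [seq y.-1 | y <- t & 1 < y].

Lemma nth_hk t i : sorted geq t -> nth 0 (hk t) i = (nth 0 t i).-1.
Proof.
elim: t i => [|x t IH] i Hs; first by rewrite !nth_nil.
have Ht := order_path_min geq_trans' Hs.
have Hs' := path_sorted Hs.
rewrite /hk /=; case: ifP => Hx.
  by case: i => [|i] //=; apply: IH.
have -> : [seq y <- t | 1 < y] = [::].
  apply/eqP; rewrite -(negbK (_ == _)) -has_filter; apply/hasP => -[y Hy Hy1].
  move/allP: Ht => /(_ y Hy) /= Hyx; lia.
rewrite nth_nil; case: i => [|i] /=; first lia.
have : nth 0 t i <= x by apply: (@nth_all (fun y => y <= x)).
lia.
Qed.

Lemma hk_part t : sorted geq t -> is_partition (hk t).
Proof.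
move=> Hs; apply/andP; split.
  rewrite /hk sorted_map; apply: (sub_sorted _ (sorted_filter geq_trans' _ Hs)).
  move=> a b /=; lia.
apply/allP => y /mapP [z]; rewrite mem_filter => /andP[h _] ->; lia.
Qed.

Lemma size_hk t : size (hk t) <= size t.
Proof. by rewrite size_map size_filter count_size. Qed.

Lemma sum_hk t : all (fun x => 0 < x) t -> sumn (hk t) + size t = sumn t.
Proof.
elim: t => [|x t IH] //= /andP[Hx Ht]; rewrite /hk /=.
case: ifP => H /=; rewrite -(IH Ht) /hk; lia.
Qed.

Lemma count_hk t i : 0 < i -> count (fun y => i <= y) (hk t) = count (fun y => i.+1 <= y) t.
Proof.
move=> Hi; rewrite count_map count_filter; apply: eq_count => y /=; apply/andP/idP; lia.
Qed.

Lemma count_le m a n : count (fun i => i <= m) (iota a n) <= m.+1 - a.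
Proof.
elim: n a => [|n IH] a //=; have := IH a.+1; case: (leqP a m) => /= H; lia.
Qed.

Lemma frob_rankN s N : size s <= N ->
  frob_rank s = count (fun i => i <= part s i) (iota 1 N).
Proof.
move=> H; rewrite /frob_rank -(subnKC H) iotaD count_cat.
suff -> : count (fun i => i <= part s i) (iota (1 + size s) (N - size s)) = 0 by rewrite addn0.
apply/eqP; rewrite -leqn0 leqNgt -has_count; apply/hasP => -[i]; rewrite mem_iota /part => /andP[H1 H2].
rewrite nth_default /=; lia.
Qed.

Lemma frob_rank_le s : is_partition s -> frob_rank s <= part s 1.
Proof.
move=> Hp; rewrite /frob_rank.
apply: leq_trans (sub_count _ _) _; last first.
  have := count_le (part s 1) 1 (size s); rewrite subn1 /=; exact.
move=> i /= H; apply: leq_trans H _; rewrite /part /=; exact: part_le0.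
Qed.

Definition cond (s : seq nat) i := frob_beta s i == frob_alpha s i + 1.

Section Hook.
Variables (x : nat) (t : seq nat).
Hypothesis Hp : is_partition (x :: t).
Hypothesis Hx : size t = x.

Lemma x_pos : 0 < x.
Proof. by case/andP: Hp => _ /andP[]. Qed.

Lemma t_sorted : sorted geq t.
Proof. by case/andP: Hp => /path_sorted. Qed.

Lemma t_le i : nth 0 t i <= x.
Proof. by have := @part_le0 (x :: t) i.+1 Hp. Qed.

Lemma frob_rank_hook : frob_rank (x :: t) = (frob_rank (hk t)).+1.
Proof.
have Hx0 := x_pos.
rewrite (@frob_rankN (x :: t) x.+1) /= ?Hx // (@frob_rankN (hk t) x); last first.
  by rewrite -Hx size_hk.
rewrite /part /= Hx0 add1n; congr _.+1.
rewrite -[2]/(1 + 1) iotaDl count_map; apply: eq_in_count => i.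
rewrite mem_iota => /andP[H1 _] /=.
case: i H1 => [|i] //= _; rewrite nth_hk ?t_sorted //.
apply/idP/idP; lia.
Qed.

Lemma all_hook :
  all (cond (x :: t)) (iota 1 (frob_rank (x :: t))) =
  all (cond (hk t)) (iota 1 (frob_rank (hk t))).
Proof.
have Hx0 := x_pos; have Hs := t_sorted.
have Hall : all (fun y => 0 < y) (x :: t) by case/andP: Hp.
rewrite frob_rank_hook /=.
have -> : cond (x :: t) 1.
  rewrite /cond /frob_beta /frob_alpha /conjpart /part /=.
  have Hc : count (fun y => 1 <= y) (x :: t) = size (x :: t) by apply/eqP; rewrite -all_count.
  rewrite /= in Hc; rewrite Hc Hx; apply/eqP; lia.
rewrite /= -[2]/(1 + 1) iotaDl all_map; apply: eq_in_all => i.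
rewrite mem_iota => /andP[H1 H2].
have Hd := @frob_rank_le (hk t) (@hk_part t Hs).
have : part (hk t) 1 <= x.-1 by rewrite /part /= nth_hk // ; have := t_le 0; lia.
move=> Hd2.
case: i H1 H2 => [|i] //= _ Hi.
rewrite /cond /frob_beta /frob_alpha /conjpart /part /= count_hk // nth_hk //.
have -> : (i.+2 <= x) = true by apply/idP; lia.
rewrite !add1n /=; apply/eqP/eqP; lia.
Qed.

Lemma inP_hook m m' : size (x :: t) <= m -> size (hk t) <= m' ->
  inP m (x :: t) = inP m' (hk t).
Proof.
move=> H1 H2; rewrite /inP Hp (@hk_part t t_sorted) /plen H1 H2 /=.
exact: all_hook.
Qed.

Lemma psize_hook : psize (x :: t) = psize (hk t) + 2 * x.
Proof.
have Hall : all (fun y => 0 < y) t by case/andP: Hp => _ /andP[].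
rewrite /psize /= -(@sum_hk t Hall) Hx; lia.
Qed.

End Hook.

Lemma inP_first m x t : inP m (x :: t) -> size t = x.
Proof.
case/and3P=> Hp _; have Hx0 : 0 < x by case/andP: Hp => _ /andP[].
have Hall : all (fun y => 0 < y) (x :: t) by case/andP: Hp.
rewrite (@frob_rankN (x :: t) (size t).+1) //= /part /= Hx0 add1n /=.
case/andP; rewrite /frob_beta /frob_alpha /conjpart /part /=.
have Hc : count (fun y => 1 <= y) (x :: t) = size (x :: t) by apply/eqP; rewrite -all_count.
rewrite /= in Hc; rewrite Hc => /eqP; lia.
Qed.

Import Order.TTheory GRing.Theory Num.Theory.
Local Open Scope ring_scope.
Definition Mg (r : nat) (g : 'I_r -> nat) : 'M[int]_r :=
  \matrix_(i < r, j < r) Dentry r i.+1 (g j).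
Arguments Mg {r} g.

Lemma eq_Mg r (g1 g2 : 'I_r -> nat) : (forall j, g1 j = g2 j) -> Mg g1 = Mg g2.
Proof. by move=> H; apply/matrixP => i j; rewrite !mxE H. Qed.

Lemma Dshift r k c : Dentry r.+1 k c.+1 = Dentry r k c.
Proof. by rewrite /Dentry !addSn !eqSS. Qed.

Lemma minorE r (g : 'I_r.+1 -> nat) (j : 'I_r.+1) :
  (forall k, (0 < g (lift j k))%N) ->
  row' ord_max (col' j (Mg g)) = Mg (fun k => (g (lift j k)).-1).
Proof.
move=> H; apply/matrixP => i k; rewrite !mxE lift_max.
by rewrite -{1}(prednK (H k)) Dshift.
Qed.

Lemma lastrowE r (g : 'I_r.+1 -> nat) j :
  Mg g ord_max j = if (g j == 0)%N || (g j == 2 * r)%N then 1 else 0.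
Proof.
rewrite mxE /Dentry /=.
have -> : (g j + r.+1 == r.+1)%N = (g j == 0)%N by apply/eqP/eqP; lia.
have -> : (g j + 2 == r.+1 + r.+1)%N = (g j == 2 * r)%N by apply/eqP/eqP; lia.
by case: ifP.
Qed.

Lemma detA r (g : 'I_r.+1 -> nat) :
  g ord_max = (2 * r)%N ->
  (forall j, j != ord_max -> (0 < g j)%N && (g j != 2 * r)%N) ->
  \det (Mg g) = \det (Mg (fun k => (g (lift ord_max k)).-1)).
Proof.
move=> Hm Hj; rewrite (expand_det_row _ ord_max) (bigD1 ord_max) //=.
rewrite big1 ?addr0; last first.
  move=> j /Hj /andP[H1 H2]; rewrite lastrowE.
  by rewrite (negbTE H2) orbF; case: eqP H1 => [->|]; rewrite ?mul0r.
rewrite lastrowE Hm eqxx orbT mul1r /cofactor minorE; last first.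
  move=> k; have : lift ord_max k != ord_max.
    by apply/eqP => E; move: (neq_lift ord_max k); rewrite E eqxx.
  by move/Hj/andP=> [].
by rewrite -signr_odd /= addnn odd_double expr0 mul1r.
Qed.

Lemma detB r (g : 'I_r.+1 -> nat) :
  g ord0 = 0%N ->
  (forall j, j != ord0 -> (0 < g j)%N && (g j != 2 * r)%N) ->
  \det (Mg g) = (-1) ^+ r * \det (Mg (fun k => (g (lift ord0 k)).-1)).
Proof.
move=> Hm Hj; rewrite (expand_det_row _ ord_max) (bigD1 ord0) //=.
rewrite big1 ?addr0; last first.
  move=> j /Hj /andP[H1 H2]; rewrite lastrowE.
  by rewrite (negbTE H2) orbF; case: eqP H1 => [->|]; rewrite ?mul0r.
rewrite lastrowE Hm eqxx mul1r /cofactor minorE; last first.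
  move=> k; have : lift ord0 k != ord0.
    by apply/eqP => E; move: (neq_lift ord0 k); rewrite E eqxx.
  by move/Hj/andP=> [].
by rewrite addn0.
Qed.

Lemma detZ r (g : 'I_r.+1 -> nat) :
  (forall j, (g j != 0)%N && (g j != 2 * r)%N) -> \det (Mg g) = 0.
Proof.
move=> Hj; rewrite (expand_det_row _ ord_max) big1 // => j _.
by rewrite lastrowE; case/andP: (Hj j) => /negbTE -> /negbTE ->; rewrite mul0r.
Qed.

Lemma detE r (g : 'I_r.+1 -> nat) :
  (0 < r)%N -> g ord0 = 0%N -> g ord_max = (2 * r)%N -> \det (Mg g) = 0.
Proof.
move=> r0 H0 Hm; rewrite -det_tr (@determinant_alternate _ _ _ ord0 ord_max).
- by [].
- by rewrite -val_eqE /=; lia.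
move=> i; rewrite !mxE H0 Hm /Dentry.
have -> : (0 + i.+1 == r.+1)%N || (2 == r.+1 + i.+1)%N = (i == r :> nat).
  by apply/idP/idP => [/orP[]/eqP|/eqP] ?; [apply/eqP; lia| apply/eqP; lia| apply/orP; left; apply/eqP; lia].
have -> : (2 * r + i.+1 == r.+1)%N || (2 * r + 2 == r.+1 + i.+1)%N = (i == r :> nat).
  by apply/idP/idP => [/orP[]/eqP|/eqP] ?; [apply/eqP; lia| apply/eqP; lia| apply/orP; right; apply/eqP; lia].
by [].
Qed.

Lemma div2_shift r : (0 < r)%N -> ((r.+1 * (r.+1 - 1)) %/ 2 = (r * (r - 1)) %/ 2 + r)%N.
Proof.
move=> H; have -> : (r.+1 * (r.+1 - 1) = r * 2 + r * (r - 1))%N.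
  case: r H => // n _; rewrite !subn1 /= !mulSn !mulnS; lia.
by rewrite divnMDl // addnC.
Qed.

Lemma sign_shift (a b r : nat) :
  (-1) ^+ (a + r + (b + r))%N = (-1) ^+ (a + b)%N :> int.
Proof.
rewrite -signr_odd -[RHS]signr_odd !oddD.
by case: (odd a); case: (odd b); case: (odd r).
Qed.

Lemma gE r lam (j : 'I_r.+1) : Ielem r.+1 lam j = (nth 0%N lam (r - j) + j)%N.
Proof. by rewrite /Ielem /part subSn // -ltnS. Qed.

Lemma main_ind r : (0 < r)%N -> forall lam, is_partition lam -> (size lam <= r)%N ->
  (nth 0%N lam 0 <= r - 1)%N ->
  \det (Mg (fun j : 'I_r => Ielem r lam j)) =
    (if inP r lam then (-1) ^+ ((r * (r - 1)) %/ 2 + psize lam %/ 2)%N else 0).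
Proof.
elim: r => [//|r IH] _ lam Hp Hs Hx0.
case: (posnP r) => [r0|rpos].
  subst r; case: lam Hp Hs Hx0 => [|x [|y t]] //=; last first.
    by case/andP=> _ /andP[]; case: x.
  move=> _ _ _; rewrite det_mx11 mxE /Ielem /part /Dentry /=.
  by vm_compute.
set g := fun j : 'I_r.+1 => Ielem r.+1 lam j.
have Hle i : (nth 0%N lam i <= nth 0%N lam 0)%N by apply: part_le0.
have Hg j : g j = (nth 0%N lam (r - j) + j)%N by rewrite /g gE.
have g0 : g ord0 = nth 0%N lam r by rewrite Hg subn0 addn0.
have gm : g ord_max = (nth 0%N lam 0 + r)%N by rewrite Hg subnn.
have gpos j : j != ord0 -> (0 < g j)%N.
  move=> Hj; rewrite Hg; have : (0 < j)%N by rewrite lt0n.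
  lia.
have gne j : j != ord_max -> (g j != 2 * r)%N.
  move=> Hj; rewrite Hg; have : (j < r)%N.
    by rewrite ltn_neqAle -ltnS ltn_ord andbT; apply: contra Hj => /eqP E; apply/eqP/val_inj.
  have := Hle (r - j)%N; lia.
have g0ne : (g ord0 != 2 * r)%N.
  by rewrite g0; have := Hle r; lia.
have gmne : (g ord_max != 0)%N by rewrite gm; lia.
have sizeP : nth 0%N lam r = 0%N -> (size lam <= r)%N by apply: size_le.
have sizeQ : (0 < nth 0%N lam r)%N -> size lam = r.+1.
  move=> H; apply/eqP; rewrite eqn_leq Hs /=; rewrite ltnNge; apply/negP => /(nth_default 0%N).
  lia.
case: (eqVneq (nth 0%N lam 0) r) => Ex; case: (posnP (nth 0%N lam r)) => Ey.
-
  have -> : \det (Mg g) = 0 by apply: detE => //; [rewrite g0 | rewrite gm Ex; lia].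
  have [x [t Elam]] : exists x t, lam = x :: t.
    by case: (lam) Ex => [|x t]; [rewrite /=; lia | exists x, t].
  case: ifP => //; rewrite Elam => /inP_first; have := sizeP Ey; rewrite Elam in Ex |- *; rewrite /= in Ex |- *; lia.
-
  have Hsz := sizeQ Ey.
  have [x [t Elam]] : exists x t, lam = x :: t.
    by case: (lam) Hsz => [|x t] //; exists x, t.
  rewrite Elam in Hp; rewrite Elam /= in Ex Hsz; case: Hsz => Hsz; subst x.
  have Htp : is_partition t by move: Hp; rewrite /is_partition /= => /andP[/path_sorted -> /andP[_ ->]].
  have Hts : sorted geq t by case/andP: Htp.
  rewrite detA; last first.
  - move=> j Hj; case: (eqVneq j ord0) => [->|Hj0]; first by rewrite g0ne g0 Ey.
    by rewrite gpos ?gne.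
  - by rewrite gm Elam /=; lia.
  rewrite (@eq_Mg r _ (fun j : 'I_r => Ielem r (hk t) j)); last first.
    move=> k; rewrite Hg /Ielem /part lift_max.
    have Hk := ltn_ord k.
    have -> : (r - k = (r - k - 1).+1)%N by lia.
    rewrite /= nth_hk //.
    have : (0 < nth 0%N t (r - k - 1))%N by apply: pos_nth => //; lia.
    rewrite Elam /=.
    lia.
  rewrite IH //; last first.
  - by rewrite nth_hk //; have := Hle 1%N; rewrite Elam /=; lia.
  - by rewrite -Hsz size_hk.
  - exact: hk_part.
  rewrite Elam (@inP_hook r t Hp Hsz r.+1 r); last by rewrite -Hsz size_hk.
  2: by rewrite /= Hsz.
  case: ifP => // _.
  rewrite (@psize_hook r t Hp Hsz) div2_shift //.
  have -> : ((psize (hk t) + 2 * r) %/ 2 = psize (hk t) %/ 2 + r)%N.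
    by rewrite addnC mulnC divnMDl // addnC.
  by rewrite sign_shift.
-
  have Hsl := sizeP Ey.
  rewrite detB; last first.
  - move=> j Hj; rewrite gpos //=; case: (eqVneq j ord_max) => [->|Hjm]; last exact: gne.
    by rewrite gm; lia.
  - by rewrite g0 Ey.
  rewrite (@eq_Mg r _ (fun j : 'I_r => Ielem r lam j)); last first.
    move=> k; rewrite Hg lift0 /Ielem /part /= subnS addnS /=; lia.
  rewrite IH //; last by lia.
  have -> : inP r.+1 lam = inP r lam by rewrite /inP /plen Hsl (leqW Hsl).
  case: ifP => _; last by rewrite mulr0.
  by rewrite -exprD div2_shift // addnCA addnA.
-
  have Hsz := sizeQ Ey.
  have -> : \det (Mg g) = 0.
    apply: detZ => j; case: (eqVneq j ord0) => [->|Hj0].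
      by rewrite g0ne g0 andbT -lt0n.
    rewrite -lt0n gpos //=; case: (eqVneq j ord_max) => [->|Hjm]; last exact: gne.
    by rewrite gm; lia.
  have [x [t Elam]] : exists x t, lam = x :: t.
    by case: (lam) Hsz => [|x t] //; exists x, t.
  case: ifP => //; rewrite Elam => /inP_first; rewrite Elam /= in Ex Hsz; lia.
Qed.


Lemma DeltaIE r lam : (0 < r)%N -> is_partition lam -> (part lam 1 <= r - 1)%N ->
  DeltaI r lam = Mg (fun j : 'I_r => Ielem r lam j).
Proof.
move=> r0 Hp H1; apply/matrixP => i j; rewrite !mxE /Icol val_insubd.
case: ifP => // /negP []; rewrite /Ielem /part.
have := @part_le0 lam (r - j).-1 Hp; have := ltn_ord j; rewrite /part /= in H1.
case: r r0 i j H1 => // n _ i j H1 /=; rewrite mulSn mulnS /=; lia.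
Qed.

Theorem mainTheorem4 (r : nat) (lam : seq nat) :
  (1 <= r)%N ->
  is_partition lam ->
  (plen lam <= r)%N ->
  (part lam 1 <= r - 1)%N ->
  \det (DeltaI r lam) =
    (if inP r lam
     then (-1) ^+ ((r * (r - 1)) %/ 2 + psize lam %/ 2)%N
     else 0).
Proof.
move=> r0 Hp Hs H1; rewrite DeltaIE // main_ind //.
Qed.
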